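(* Let $\mathbb{F}$ be a field of characteristic different from $2$ and let $\mathcal{J}Spin_n(\mathbb{F})$ be the spin factor defined in the context. Then every 2-local inner derivation on $\mathcal{J}Spin_n(\mathbb{F})$ is a derivation.
   Context: $\mathcal{J}Spin_n(\mathbb{F})=\mathbb{F}\mathbf{1}\oplus V$, where $V$ is an $n$-dimensional $\mathbb{F}$-vector space with a symmetric bilinear form $f$ and a basis $\xi_1,\dots,\xi_n$ with $f(\xi_i,\xi_j)=0$ for $i\ne j$ and $f(\xi_i,\xi_i)=1$; the product is $(\alpha\mathbf{1}+x)\cdot(\beta\mathbf{1}+y)=(\alpha\beta+f(x,y))\mathbf{1}+(\beta x+\alpha y)$ for $\alpha,\beta\in\mathbb{F}$, $x,y\in V$. Thus with $s_i=\xi_i$ one has the basis $\{\mathbf{1},s_1,\dots,s_n\}$ with $s_i s_i=\mathbf{1}$, $s_is_j=0$ ($i\neq j$), $s_k\mathbf{1}=s_k$. A derivation is a linear map $D$ with $D(xy)=D(x)y+xD(y)$. An inner derivation is a map of the form $x\mapsto\sum_{k=1}^m\big(a_k(b_kx)-b_k(a_kx)\big)$ with $a_k,b_k$ in the algebra. A 2-local inner derivation is a map $\Delta$ (not assumed linear) such that for every $x,y$ there is an inner derivation $D$ with $\Delta(x)=D(x)$, $\Delta(y)=D(y)$. *)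

(* Defs.v *)
From mathcomp Require Import all_boot all_order all_algebra.
Set Implicit Arguments. Unset Strict Implicit. Unset Printing Implicit Defensive.
Import GRing.Theory.
Local Open Scope ring_scope.

(* The spin factor JSpin_n(F) = F 1 (+) V, dim V = n, with orthonormal basis
   xi_1..xi_n for the form f.  Elements are row vectors of length n+1:
   coordinate 0 is the coefficient of 1, coordinate (lift ord0 i) is the
   coefficient of xi_(i+1). *)
Definition JSpin (F : fieldType) (n : nat) := 'rV[F]_(n.+1).

Section Spin.
Variables (F : fieldType) (n : nat).

Definition jscal (x : JSpin F n) : F := x 0 ord0.
Definition jvec (x : JSpin F n) (i : 'I_n) : F := x 0 (lift ord0 i).
Definition jform (x y : JSpin F n) : F := \sum_(i < n) jvec x i * jvec y i.

Definition jmul (x y : JSpin F n) : JSpin F n :=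
  \row_(k < n.+1)
    (if unlift ord0 k is Some i
     then jscal y * jvec x i + jscal x * jvec y i
     else jscal x * jscal y + jform x y).

Definition is_derivation (D : JSpin F n -> JSpin F n) : Prop :=
  (forall (c : F) (x y : JSpin F n), D (c *: x + y) = c *: D x + D y) /\
  (forall x y : JSpin F n, D (jmul x y) = jmul (D x) y + jmul x (D y)).

Definition inner_der (ab : seq (JSpin F n * JSpin F n)) (x : JSpin F n)
  : JSpin F n :=
  \sum_(p <- ab) (jmul p.1 (jmul p.2 x) - jmul p.2 (jmul p.1 x)).

Definition is_2local_inner_derivation (Delta : JSpin F n -> JSpin F n) : Prop :=
  forall x y : JSpin F n, exists ab : seq (JSpin F n * JSpin F n),
    Delta x = inner_der ab x /\ Delta y = inner_der ab y.

End Spin.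

(* Main.v *)
Require Import Defs.
From mathcomp Require Import all_boot all_order all_algebra.
From mathcomp Require Import ring.
Set Implicit Arguments. Unset Strict Implicit. Unset Printing Implicit Defensive.
Import GRing.Theory.
Local Open Scope ring_scope.

Section Aux.
Variables (F : fieldType) (n : nat).
Implicit Types (x y z a b : JSpin F n).

Lemma jscalD x y : jscal (x + y) = jscal x + jscal y.
Proof. by rewrite /jscal mxE. Qed.
Lemma jscalB x y : jscal (x - y) = jscal x - jscal y.
Proof. by rewrite /jscal !mxE. Qed.
Lemma jscalZ c x : jscal (c *: x) = c * jscal x.
Proof. by rewrite /jscal mxE. Qed.
Lemma jscal0 : jscal (0 : JSpin F n) = 0.
Proof. by rewrite /jscal mxE. Qed.
Lemma jvecD x y i : jvec (x + y) i = jvec x i + jvec y i.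
Proof. by rewrite /jvec mxE. Qed.
Lemma jvecB x y i : jvec (x - y) i = jvec x i - jvec y i.
Proof. by rewrite /jvec !mxE. Qed.
Lemma jvecZ c x i : jvec (c *: x) i = c * jvec x i.
Proof. by rewrite /jvec mxE. Qed.
Lemma jvec0 i : jvec (0 : JSpin F n) i = 0.
Proof. by rewrite /jvec mxE. Qed.

Lemma jscal_mul x y : jscal (jmul x y) = jscal x * jscal y + jform x y.
Proof. by rewrite {1}/jscal /jmul mxE unlift_none. Qed.
Lemma jvec_mul x y i : jvec (jmul x y) i = jscal y * jvec x i + jscal x * jvec y i.
Proof. by rewrite {1}/jvec /jmul mxE liftK. Qed.

Lemma jformC x y : jform x y = jform y x.
Proof. by apply: eq_bigr => i _; rewrite mulrC. Qed.
Lemma jformD x y z : jform (x + y) z = jform x z + jform y z.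
Proof. rewrite /jform -big_split; apply: eq_bigr => i _; by rewrite jvecD mulrDl. Qed.
Lemma jformB x y z : jform (x - y) z = jform x z - jform y z.
Proof.
rewrite /jform -sumrB; apply: eq_bigr => i _; rewrite jvecB; ring.
Qed.
Lemma jformDr x y z : jform z (x + y) = jform z x + jform z y.
Proof. by rewrite jformC jformD !(jformC z). Qed.
Lemma jformZ c x z : jform (c *: x) z = c * jform x z.
Proof. rewrite /jform mulr_sumr; apply: eq_bigr => i _; rewrite jvecZ; ring. Qed.
Lemma jform0 z : jform 0 z = 0.
Proof. rewrite /jform big1 // => i _; rewrite jvec0; ring. Qed.
Lemma jform_mul a x y :
  jform (jmul a x) y = jscal x * jform a y + jscal a * jform x y.
Proof.
rewrite /jform !mulr_sumr -big_split; apply: eq_bigr => i _.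
by rewrite jvec_mul mulrDl !mulrA.
Qed.

Definition ee (i : 'I_n) : JSpin F n := delta_mx 0 (lift ord0 i).
Lemma jform_ee x i : jform x (ee i) = jvec x i.
Proof.
rewrite /jform (bigD1 i) //= big1 => [|j ji].
  by rewrite /jvec /ee mxE !eqxx mulr1 addr0.
rewrite /jvec /ee mxE /= (inj_eq (@lift_inj _ ord0)) (negbTE ji) mulr0 //.
Qed.

Lemma inner_pair a b x y :
  let D := fun x => jmul a (jmul b x) - jmul b (jmul a x) in
  jscal (D x) = 0 /\ jform (D x) y + jform x (D y) = 0.
Proof.
move=> D; split.
  rewrite /D jscalB !jscal_mul (jformC a (jmul b x)) (jformC b (jmul a x)) !jform_mul.
  rewrite (jformC b a) (jformC x a) (jformC x b); ring.
rewrite (jformC x) /D !jformB !jform_mul !jscal_mul.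
rewrite ?(jformC x a) ?(jformC x b) ?(jformC y a) ?(jformC y b) ?(jformC y x); ring.
Qed.

Lemma inner_props ab x y :
  jscal (inner_der ab x) = 0 /\
  jform (inner_der ab x) y + jform x (inner_der ab y) = 0.
Proof.
rewrite /inner_der; elim: ab => [|[a b] ab [IH1 IH2]].
  by rewrite !big_nil jscal0 jform0 jformC jform0 addr0.
rewrite !big_cons /=; have [H1 H2] := inner_pair a b x y.
split; first by rewrite jscalD H1 IH1 addr0.
by rewrite jformD jformDr addrACA H2 IH2 addr0.
Qed.

End Aux.

Theorem theorem3p2 (F : fieldType) (n : nat) (hchar : (2 : F) != 0)
  (Delta : JSpin F n -> JSpin F n) :
  is_2local_inner_derivation Delta -> is_derivation Delta.
Proof.
move=> H.
have P1 : forall x, jscal (Delta x) = 0.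
  move=> x; have [ab [-> _]] := H x x; exact: (inner_props ab x x).1.
have P2 : forall x y, jform (Delta x) y + jform x (Delta y) = 0.
  move=> x y; have [ab [-> ->]] := H x y; exact: (inner_props ab x y).2.
have P3 : forall x i, jvec (Delta x) i = - jform x (Delta (@ee F n i)).
  move=> x i; rewrite -(jform_ee (Delta x)); apply/eqP; rewrite -subr_eq0 opprK.
  by rewrite P2.
have Hsc : forall v : JSpin F n, v 0 ord0 = jscal v by [].
have Hvc : forall (v : JSpin F n) i, v 0 (lift ord0 i) = jvec v i by [].
split.
  move=> c x y; apply/rowP => k; case: (unliftP ord0 k) => [i ->|->].
    rewrite !mxE !Hvc P3 (P3 x) (P3 y) jformD jformZ; ring.
  by rewrite !mxE !Hsc !P1; ring.
move=> x y; apply/rowP => k; case: (unliftP ord0 k) => [i ->|->].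
  rewrite mxE !Hvc !jvec_mul !P1 P3 jform_mul (P3 x) (P3 y); ring.
rewrite mxE !Hsc !jscal_mul !P1.
by rewrite mul0r mulr0 !add0r P2.
Qed.
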